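(* Assume $\mathcal{D}_{\mathcal{X}}$ is absolutely continuous with respect to $\mathcal{Q}$ and $C_{\mathcal{X}}\ge\|d\mathcal{D}_{\mathcal{X}}/d\mathcal{Q}\|_\infty$. Then for every measurable $H:\mathcal{X}\to\mathbb{R}$ and every measurable $h^*:\mathcal{X}\to\{\pm1\}$, $$\Phi'(H,\mathrm{sign}(H))-\Phi'(H,h^* )\ge\mathrm{corr}_{\mathcal{D}}(h^* )-\mathrm{corr}_{\mathcal{D}}(\mathrm{sign}(H)).$$
   Context: $\mathcal{D}$ is a distribution on $\mathcal{X}\times\{\pm1\}$ with feature marginal $\mathcal{D}_{\mathcal{X}}$, and $\mathcal{Q}$ is another distribution on $\mathcal{X}$. $\mathrm{corr}_{\mathcal{D}}(h)=\mathbb{E}_{(x,y)\sim\mathcal{D}}[yh(x)]$. $\mathrm{sign}(z)=1$ if $z\ge0$, else $-1$. $\psi$ is the Huber loss ($\psi(z)=|z|-\tfrac12$ for $|z|>1$, $\tfrac12z^2$ for $|z|\le1$), $\psi'(z)=\mathrm{sign}(z)\min\{1,|z|\}$. For measurable $H:\mathcal{X}\to\mathbb{R}$ and bounded measurable $h$, $\Phi'(H,h)=C_{\mathcal{X}}\,\mathbb{E}_{x\sim\mathcal{Q}}[\psi'(H(x))h(x)]-\mathbb{E}_{(x,y)\sim\mathcal{D}}[yh(x)]$. *)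

(* Defs.v *)
From HB Require Import structures.
From mathcomp Require Import all_boot all_order all_algebra.
From mathcomp Require Import all_classical all_reals all_analysis.
From mathcomp Require Import charge ess_sup_inf.
Set Implicit Arguments. Unset Strict Implicit. Unset Printing Implicit Defensive.
Import Order.TTheory GRing.Theory Num.Theory.
Import numFieldNormedType.Exports.
Local Open Scope classical_set_scope.
Local Open Scope ring_scope.

(* Labels {+1,-1} are encoded by bool: true ↦ +1, false ↦ -1. *)
Definition lab {R : realType} (b : bool) : R := if b then 1 else -1.

Definition sgn {R : realType} (z : R) : R := if 0 <= z then 1 else -1.

Definition huber' {R : realType} (z : R) : R := sgn z * Num.min 1 `|z|.

Definition corr {d} {X : measurableType d} {R : realType}
  (D : {measure set (X * bool) -> \bar R}) (h : X -> R) : R :=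
  \int[D]_(p in [set: X * bool]) (lab p.2 * h p.1).

Definition Phi' {d} {X : measurableType d} {R : realType}
  (C : R) (Q : {measure set X -> \bar R})
  (D : {measure set (X * bool) -> \bar R}) (H h : X -> R) : R :=
  C * (\int[Q]_(x in [set: X]) (huber' (H x) * h x))%R - corr D h.

(* Main.v *)
Require Import Defs.
From HB Require Import structures.
From mathcomp Require Import all_boot all_order all_algebra.
From mathcomp Require Import all_classical all_reals all_analysis.
From mathcomp Require Import charge ess_sup_inf.
From mathcomp Require Import lra.
Import Order.TTheory GRing.Theory Num.Theory.
Import numFieldNormedType.Exports.
Local Open Scope classical_set_scope.
Local Open Scope ring_scope.
Local Open Scope charge_scope.

Lemma C_ge0 {d : measure_display} {X : measurableType d} {R : realType}
  (DX : probability X R) (Q : probability X R) (C : R) :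
  DX `<< Q ->
  (ess_sup Q ('d (charge_of_finite_measure DX) '/d Q) <= C%:E)%E -> 0 <= C.
Proof.
move=> ac hC; rewrite leNgt; apply/negP => C0.
set g := 'd (charge_of_finite_measure DX) '/d Q.
have ig : Q.-integrable [set: X] g by exact: Radon_Nikodym_integrable.
have mg := measurable_int _ ig.
have hint := @Radon_Nikodym_integral _ _ _ (charge_of_finite_measure DX) Q setT ac measurableT.
rewrite /= probability_setT -/g in hint.
have ae : \forall x \ae Q, (g x <= 0)%E.
  apply: filterS (ess_sup_ge Q g) => x hx.
  by apply: (le_trans hx); apply: (le_trans hC); rewrite lee_fin ltW.
have h0 : (\int[Q]_(x in [set: X]) g^\+ x <= \int[Q]_(x in [set: X]) (cst 0%E) x)%E.
  apply: ae_ge0_le_integral => //.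
  - exact: measurable_realfun.measurable_funepos.
  - move: ae; apply: filterS => x hx Tx /=.
    by rewrite funeposE ge_max lexx hx.
rewrite integral0 in h0.
move: hint; rewrite integralE => hint.
have hle : ((\int[Q]_(x in [set: X]) g^\+ x) - (\int[Q]_(x in [set: X]) g^\- x) <= 0)%E.
  apply: (@le_trans _ _ (0 - 0)%E); last by rewrite sube0.
  apply: leeB => //; apply: integral_ge0 => x _; exact: funeneg_ge0.
rewrite -hint in hle.
by move: hle; rewrite lee_fin ler10.
Qed.

Lemma sgn_meas (d : measure_display) (X : measurableType d) (R : realType) (H : X -> R) :
  measurable_fun [set: X] H -> measurable_fun [set: X] (fun x => sgn (H x)).
Proof.
move=> mH; rewrite /sgn; apply: measurable_fun_ifT => //.
exact: measurable_realfun.measurable_fun_ler.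
Qed.

Lemma huber_meas (d : measure_display) (X : measurableType d) (R : realType) (H : X -> R) :
  measurable_fun [set: X] H -> measurable_fun [set: X] (fun x => huber' (H x)).
Proof.
move=> mH; rewrite /huber'; apply: measurable_realfun.measurable_funM; first exact: sgn_meas.
apply: measurable_realfun.measurable_minr => //; exact: measurableT_comp.
Qed.

Lemma bnd_int {d : measure_display} {X : measurableType d} {R : realType}
  (Q : probability X R) (f : X -> R) :
  measurable_fun [set: X] f -> (forall x, `|f x| <= 1) ->
  Q.-integrable [set: X] (EFin \o f).
Proof.
move=> mf hf; apply: measurable_bounded_integrable => //.
  by apply: (le_lt_trans (probability_le1 Q measurableT)); exact: ltry.

exists 1; split => // M M1 x _; apply: (le_trans (hf x)); exact: ltW.
Qed.

Lemma huber_abs {R : realType} (z : R) : `|huber' z| <= 1.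
Proof.
rewrite /huber' /sgn normrM; have hm : `|Num.min 1 `|z| | <= 1.
  by rewrite ger0_norm ?ge_min ?lexx // le_min ler01 normr_ge0.
by case: ifP => _; rewrite ?normrN normr1 mul1r.
Qed.

Theorem mainTheorem5 (d : measure_display) (X : measurableType d) (R : realType)
  (D : probability (X * bool)%type R) (DX : probability X R) (Q : probability X R)
  (C : R) :
  (* DX is the feature marginal of D *)
  (forall A : set X, measurable A -> DX A = D (A `*` [set: bool])) ->
  (* D_X is absolutely continuous w.r.t. Q *)
  DX `<< Q ->
  (* C >= || dD_X/dQ ||_oo *)
  (ess_sup Q ('d (charge_of_finite_measure DX) '/d Q) <= C%:E)%E ->
  forall (H hs : X -> R),
    measurable_fun [set: X] H ->
    measurable_fun [set: X] hs ->
    (forall x, hs x = 1 \/ hs x = -1) ->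
    Phi' C Q D H (fun x => sgn (H x)) - Phi' C Q D H hs
      >= corr D hs - corr D (fun x => sgn (H x)).
Proof.
move=> _ ac hC H hs mH mhs hpm.
have C0 := C_ge0 _ _ _ ac hC.
have hI : (\int[Q]_(x in [set: X]) (huber' (H x) * hs x))%R
   <= (\int[Q]_(x in [set: X]) (huber' (H x) * sgn (H x)))%R.
  apply: le_Rintegral => //.
  - apply: bnd_int; first by apply: measurable_realfun.measurable_funM => //; exact: huber_meas.
    move=> x; rewrite normrM; have := huber_abs (H x).
    by case: (hpm x) => ->; rewrite ?normrN normr1 mulr1.
  - apply: bnd_int; first by apply: measurable_realfun.measurable_funM; [exact: huber_meas|exact: sgn_meas].
    move=> x; rewrite normrM; have := huber_abs (H x).
    by rewrite /sgn; case: ifP => _; rewrite ?normrN normr1 mulr1.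
  - move=> x _; rewrite /huber' /sgn.
    have hm : 0 <= Num.min 1 `|H x| by rewrite le_min ler01 normr_ge0.
    by case: ifP => _; case: (hpm x) => ->; lra.
have := ler_wpM2l C0 hI.
rewrite /Phi'; lra.
Qed.
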